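(* Let $n\in\mathbb{N}$, $q\ge 2$, and let $\Gamma$ be a finite constraint language of $k$-ary relations over $[q]$. For $a,b\in[q]^n$, define $(a,b)\in\mathcal{E}$ if every instance of $\mathsf{CSP}(\Gamma)$ on $n$ variables that is satisfied by $a$ is also satisfied by $b$. Then $\mathcal{E}$ is an equivalence relation on $[q]^n$. Moreover, for every $a\in[q]^n$ there exists an instance $P_a$ of $\mathsf{CSP}(\Gamma)$ on $n$ variables with $\mathrm{Sat}(P_a)=[a]_{\mathcal{E}}$, the equivalence class of $a$ under $\mathcal{E}$.
   Context: An instance of $\mathsf{CSP}(\Gamma)$ on variables $x_1,\dots,x_n$ over $[q]=\{0,\dots,q-1\}$ is a finite set of constraints $\{R,(x_{i_1}+\lambda_{i_1},\dots,x_{i_k}+\lambda_{i_k})\}$ with $R\in\Gamma$, $(i_1,\dots,i_k)\in[n]^k$, $\lambda_{i_j}\in[q]$; an assignment $a\in[q]^n$ satisfies it if $(a_{i_1}+\lambda_{i_1},\dots,a_{i_k}+\lambda_{i_k})\in R$ (addition mod $q$), and satisfies the instance if it satisfies all its constraints. $\mathrm{Sat}(I)$ denotes the set of assignments satisfying $I$. *)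

(* Defs.v *)
From mathcomp Require Import all_boot.
Set Implicit Arguments. Unset Strict Implicit. Unset Printing Implicit Defensive.

Definition addq (q : nat) (x y : 'I_q) : 'I_q :=
  Ordinal (ltn_pmod (x + y) (leq_ltn_trans (leq0n x) (ltn_ord x))).

Definition relation (q k : nat) := {set k.-tuple 'I_q}.

Definition assignment (q n : nat) := {ffun 'I_n -> 'I_q}.

(* A constraint {R, (x_{i_1}+l_1, ..., x_{i_k}+l_k)}:
   relation R, variable indices (i_1..i_k), shifts (l_1..l_k). *)
Definition constraint (q n k : nat) :=
  (relation q k * k.-tuple 'I_n * k.-tuple 'I_q)%type.

Definition sat_constraint (q n k : nat) (a : assignment q n)
  (c : constraint q n k) : bool :=
  let: (R, idx, lam) := c in
  [tuple addq (a (tnth idx j)) (tnth lam j) | j < k] \in R.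

Definition is_instance (q n k : nat) (Gamma : seq (relation q k))
  (I : seq (constraint q n k)) : Prop :=
  forall c, c \in I -> c.1.1 \in Gamma.

Definition sat_instance (q n k : nat) (I : seq (constraint q n k))
  (a : assignment q n) : bool :=
  all (sat_constraint a) I.

Definition Sat (q n k : nat) (I : seq (constraint q n k)) : {set assignment q n} :=
  [set a | sat_instance I a].

Definition E (q n k : nat) (Gamma : seq (relation q k)) (a b : assignment q n) : Prop :=
  forall I : seq (constraint q n k), is_instance Gamma I ->
    sat_instance I a -> sat_instance I b.

Definition eq_class (q n k : nat) (Gamma : seq (relation q k)) (a : assignment q n)
  : assignment q n -> Prop := fun b => E Gamma a b.

(* Main.v *)
Require Import Defs.
From mathcomp Require Import all_boot.
Set Implicit Arguments. Unset Strict Implicit. Unset Printing Implicit Defensive.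

Section S.
Variables (n q k : nat) (Gamma : seq (relation q k)).

Definition ashift (a t : assignment q n) : assignment q n :=
  [ffun i => addq (a i) (t i)].

Definition csh (s : assignment q n) (c : constraint q n k) : constraint q n k :=
  let: (R, idx, lam) := c in (R, idx, [tuple addq (tnth lam j) (s (tnth idx j)) | j < k]).

Lemma sat_csh s c a : sat_constraint a (csh s c) = sat_constraint (ashift a s) c.
Proof.
case: c => [[R idx] lam] /=.
congr (_ \in R); apply: eq_from_tnth => j; rewrite !tnth_map /= !tnth_ord_tuple ffunE.
apply: val_inj => /=. by rewrite modnDmr modnDml addnAC addnA.
Qed.

Lemma E_shift (a b s : assignment q n) : E Gamma a b -> E Gamma (ashift a s) (ashift b s).
Proof.
move=> Hab I HI Ha.
have HI' : is_instance Gamma (map (csh s) I).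
  move=> c /mapP [c' Hc' ->]; case: c' Hc' => [[R idx] lam] /= H; exact: (HI _ H).
have := Hab _ HI'. rewrite /sat_instance !all_map.
have e : forall x, all (preim (csh s) (sat_constraint x)) I = all (sat_constraint (ashift x s)) I.
  by move=> x; apply: eq_all => c /=; rewrite sat_csh.
by rewrite !e; apply.
Qed.

Lemma E_refl (a : assignment q n) : E Gamma a a. Proof. by move=> I _. Qed.
Lemma E_trans (a b c : assignment q n) : E Gamma a b -> E Gamma b c -> E Gamma a c.
Proof. by move=> H1 H2 I HI Ha; apply: H2 => //; apply: H1. Qed.

Lemma E_sym (a b : assignment q n) : 2 <= q -> E Gamma a b -> E Gamma b a.
Proof.
move=> q2 Hab.
have qp : 0 < q by apply: leq_trans q2.
pose d : assignment q n := [ffun i => Ordinal (@ltn_pmod (b i + (q - a i)) q qp)].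
pose it m := iter m (fun x => ashift x d) a.
have itv : forall m i, val (it m i) = (a i + m * d i) %% q.
  elim=> [|m IH] i /=; first by rewrite mul0n addn0 modn_small.
  rewrite ffunE /= -/(it m) IH /= modnDml mulSn.
  by rewrite [d i + _]addnC addnA.
have ab : ashift a d = b.
  apply/ffunP => i; apply: val_inj; rewrite ffunE /= ffunE /= modnDmr addnCA subnKC; last exact: ltnW.
  by rewrite modnDr modn_small.
have step : forall m, E Gamma (it m) (it m.+1).
  elim=> [|m IH] /=; first by rewrite ab.
  exact: (E_shift (s:=d) IH).
have chain : forall m, E Gamma (it 1) (it m.+1).
  elim=> [|m IH]; first exact: E_refl.
  exact: (E_trans IH (step _)).
have h1 : it 1 = b by rewrite /= ab.
have hq : it q = a.
  apply/ffunP => i; apply: val_inj; rewrite itv.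
  by rewrite -modnDmr modnMr addn0 modn_small.
have := chain q.-1; rewrite prednK // h1 hq; exact.
Qed.

End S.

Theorem theorem4p2 (n q k : nat) (Gamma : seq (relation q k)) :
  2 <= q ->
  ((forall a : assignment q n, E Gamma a a) /\
   (forall a b : assignment q n, E Gamma a b -> E Gamma b a) /\
   (forall a b c : assignment q n, E Gamma a b -> E Gamma b c -> E Gamma a c)) /\
  (forall a : assignment q n, exists P : seq (constraint q n k),
     is_instance Gamma P /\ (forall b : assignment q n, b \in Sat P <-> eq_class Gamma a b)).
Proof.
move=> q2; split.
  split; first exact: E_refl.
  split; first by move=> a b; apply: E_sym.
  exact: E_trans.
move=> a.
exists [seq c <- enum {: relation q k * k.-tuple 'I_n * k.-tuple 'I_q}
          | (c.1.1 \in Gamma) && sat_constraint a c].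
split.
  by move=> c; rewrite mem_filter => /andP [/andP [] ].
move=> b; rewrite inE /eq_class; split.
  move=> Hb I HI Ha; apply/allP => c Hc.
  move/allP: Hb; apply; rewrite mem_filter mem_enum andbT HI //=.
  exact: (allP Ha).
move=> Hab; apply: Hab.
  by move=> c; rewrite mem_filter => /andP [/andP [] ].
by apply/allP => c; rewrite mem_filter => /andP [/andP [] ].
Qed.
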